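(* Let $q$ be a prime, $A$ a group of exponent $q$ and order $q^3$, and $B$ a subgroup of order $q$ of the center $Z(A)$. Suppose $A$ acts by automorphisms on a finite group $G$ of order coprime to $q$ with $G=PH$, where $P$ and $H$ are $A$-invariant subgroups, $P$ is a normal $p$-subgroup of $G$ for a prime $p$, and $H$ is a nilpotent $p'$-subgroup. Let $A_1,\dots,A_{q+1}$ be the subgroups of order $q^2$ of $A$ containing $B$. Then $C_P(B)=\prod_{i=1}^{q+1} C_P(A_i)$ and $C_H(B)=\prod_{i=1}^{q+1} C_H(A_i)$.
   Context: For a group $X$ of automorphisms, $C_P(X)$ denotes the set of elements of $P$ fixed by every element of $X$. The products are products of subgroups (sets of products of elements). *)

(* Defs.v *)
From mathcomp Require Import all_boot all_fingroup all_solvable.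
Set Implicit Arguments.
Unset Strict Implicit.
Unset Printing Implicit Defensive.

(* Main.v *)
Require Import Defs.
From mathcomp Require Import all_boot all_fingroup ssralg all_solvable.
From mathcomp Require Import zify.
Set Implicit Arguments.
Unset Strict Implicit.
Unset Printing Implicit Defensive.
Section AbPart.
Import GRing.Theory.
Import FiniteModule.
Local Open Scope ring_scope.
Local Open Scope group_scope.

Section Ab.
Variables (gT : finGroupType) (Q A : {group gT}) (abQ : abelian Q).
Hypothesis nQA : A \subset 'N(Q).

Local Notation S X u := (\sum_(a in X) (u : fmod_of abQ) ^@ a)%R.

Lemma fixC (X : {group gT}) (v : fmod_of abQ) :
  X \subset A -> (forall b, b \in X -> (v ^@ b)%R = v) -> fmval v \in 'C_Q(X).
Proof.
move=> sXA fv; rewrite inE fmodP; apply/centP=> b Xb.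
have Nb : b \in 'N(Q) by apply: (subsetP nQA); apply: (subsetP sXA).
apply/commgP/conjg_fixP; have := fmvalJ v Nb; rewrite (fv b Xb) => /esym.
by [].
Qed.

Lemma Sfix (X : {group gT}) u b : X \subset A -> b \in X -> ((S X u) ^@ b = S X u)%R.
Proof.
move=> sXA Xb.
have nQX : X \subset 'N(Q) by apply: subset_trans nQA.
rewrite actr_sum [RHS](reindex_inj (mulIg b)) /=.
apply: eq_big => [a | a Xa]; first by rewrite groupMr.
by rewrite actrM ?(subsetP nQX).
Qed.

Lemma listP (r : seq {group gT}) u : (forall X, X \in r -> X \subset A) ->
  fmval (\sum_(X <- r) S X u)%R \in \prod_(X <- r) 'C_Q(X).
Proof.
elim: r => [|X r IH] sr; first by rewrite !big_nil fmval0 set11.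
rewrite !big_cons fmvalA; apply: mem_mulg.
  by apply: fixC => [|b Xb]; [apply: sr; rewrite inE eqxx | apply: Sfix => //; apply: sr; rewrite inE eqxx].
by apply: IH => Y Yr; apply: sr; rewrite inE Yr orbT.
Qed.

Lemma sum_if (r : seq {group gT}) (P : pred {group gT}) (c : fmod_of abQ) :
  (\sum_(X <- r) (if P X then c else 0) = c *+ count P r)%R.
Proof.
elim: r => [|X r IH]; first by rewrite big_nil.
by rewrite big_cons IH /=; case: (P X); rewrite ?add0r // mulrS.
Qed.

Lemma ident (B : {group gT}) (s : seq {group gT}) u :
  B \subset A -> Q \subset 'C(B) ->
  (forall X, X \in s -> (B \subset X) && (X \subset A)) ->
  (forall a, a \in A :\: B -> count (fun X : {group gT} => a \in X) s = 1%N) ->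
  (0 < size s)%N ->
  (\sum_(X <- s) S X u = S A u + u *+ ((size s).-1 * #|B|))%R.
Proof.
move=> sBA cQB sXs cnt s0.
have -> : (\sum_(X <- s) S X u =
   \sum_(X <- s) \sum_(a in A) (if a \in X then u ^@ a else 0))%R.
  apply: eq_big_seq => X /sXs /andP[_ sXA].
  rewrite big_mkcond [RHS]big_mkcond; apply: eq_bigr => a _.
  by case: (boolP (a \in X)) => Xa; [rewrite (subsetP sXA a Xa) | case: (a \in A)].
rewrite (@exchange_big _ 0%R _ _ _ s (index_enum _) xpredT (fun a => a \in A)) /=.
under eq_bigr => a _ do rewrite (sum_if s (fun X => a \in X)).
rewrite (bigID (fun a => a \in B)) /= [S A u](bigID (fun a => a \in B)) /=.
have uB : forall a, a \in B -> (u ^@ a = u)%R.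
  move=> a Ba; apply: val_inj; rewrite fmvalJ; last first.
    by apply: (subsetP nQA); apply: (subsetP sBA).
  by apply/conjg_fixP/commgP; apply: (centP (subsetP cQB _ (fmodP u))).
have e1 : (\sum_(a in A | a \in B) u ^@ a *+ count (fun X : {group gT} => a \in X) s
   = \sum_(a in B) u *+ size s)%R.
  apply: eq_big => [a | a /andP[_ Ba]].
    by rewrite andb_idl // => /(subsetP sBA).
  rewrite uB //; congr (_ *+ _); rewrite -[RHS]count_predT.
  by apply: eq_in_count => X /sXs /andP[sBX _]; rewrite (subsetP sBX).
have e2 : (\sum_(a in A | a \in B) u ^@ a = \sum_(a in B) u)%R.
  apply: eq_big => [a | a /andP[_ Ba]]; last by rewrite uB.
  by rewrite andb_idl // => /(subsetP sBA).
have e3 : (\sum_(a in A | a \notin B) u ^@ a *+ count (fun X : {group gT} => a \in X) s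
   = \sum_(a in A | a \notin B) u ^@ a)%R.
  by apply: eq_bigr => a /andP[Aa nBa]; rewrite cnt ?inE ?nBa.
rewrite e1 e2 e3 !sumr_const -mulrnA.
rewrite -{1}(prednK s0) mulSn mulrnDr.
by rewrite addrAC.
Qed.

Lemma abel_prod (B : {group gT}) (s : seq {group gT}) :
  B \subset A -> Q \subset 'C(B) ->
  (forall X, X \in s -> (B \subset X) && (X \subset A)) ->
  (forall a, a \in A :\: B -> count (fun X : {group gT} => a \in X) s = 1%N) ->
  (0 < size s)%N -> coprime #|Q| ((size s).-1 * #|B|) ->
  Q \subset \prod_(X <- s) 'C_Q(X).
Proof.
move=> sBA cQB sXs cnt s0 co; apply/subsetP=> x Qx.
set m := ((size s).-1 * #|B|)%N.
set w := (x ^+ expg_invn Q m)%g.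
have Qw : w \in Q by rewrite groupX.
have xw : x = (w ^+ m)%g by rewrite /w expgAC expgK.
pose u := fmod abQ w.
have -> : x = fmval (u *+ m)%R by rewrite fmvalZ /u fmodK.
have := ident u sBA cQB sXs cnt s0; rewrite -/m => id.
have -> : (u *+ m = \sum_(X <- s) S X u - S A u)%R by rewrite id addrC addKr.
clear id xw; clearbody u; clear Qw w m.
case: s s0 sXs cnt co => [//|X1 s'] _ sXs _ _.
have sXA : forall X, X \in X1 :: s' -> X \subset A by move=> X /sXs /andP[].
rewrite big_cons big_cons addrAC fmvalA; apply: mem_mulg.
  apply: fixC => [|b Xb]; first by apply: sXA; rewrite inE eqxx.
  have sX1 : X1 \subset A by apply: sXA; rewrite inE eqxx.
  rewrite actAr actNr Sfix // Sfix //; exact: (subsetP sX1).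
by apply: listP => X Xs; apply: sXA; rewrite inE Xs orbT.
Qed.
End Ab.

Section Nil.

Lemma prod_sub (gT : finGroupType) (G : {group gT}) (r : seq {group gT}) (F : {group gT} -> {set gT}) :
  (forall X, X \in r -> F X \subset G) -> \prod_(X <- r) F X \subset G.
Proof.
elim: r => [|X r IH] h; first by rewrite big_nil sub1G.
rewrite big_cons mul_subG ?h ?inE ?eqxx //.
by apply: IH => Y Yr; apply: h; rewrite inE Yr orbT.
Qed.

Lemma absorb (gT : finGroupType) (Q N : {group gT}) (r : seq {group gT}) :
  N \subset Q -> N \subset 'C(Q) ->
  (\prod_(X <- r) 'C_N(X)) * (\prod_(X <- r) 'C_Q(X)) \subset \prod_(X <- r) 'C_Q(X).
Proof.
move=> sNQ cNQ; elim: r => [|X r IH]; first by rewrite !big_nil mul1g.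
rewrite !big_cons.
have sRN : \prod_(Y <- r) 'C_N(Y) \subset N by apply: prod_sub => Y _; apply: subsetIl.
have cRC : \prod_(Y <- r) 'C_N(Y) \subset 'C('C_Q(X)).
  apply: subset_trans sRN _; apply: subset_trans cNQ _; apply: centS; apply: subsetIl.
rewrite -mulgA [X in _ * X]mulgA (centC cRC) -!mulgA mulgA.
apply: mulgSS; last exact: IH.
by rewrite mul_subG // setSI.
Qed.

Lemma quot_prod (gT : finGroupType) (N : {group gT}) (r : seq {group gT}) (F : {group gT} -> {set gT}) :
  (forall X, X \in r -> F X \subset 'N(N)) ->
  \prod_(X <- r) (F X / N) = (\prod_(X <- r) F X) / N.
Proof.
elim: r => [|X r IH] h; first by rewrite !big_nil quotient1.
rewrite !big_cons quotientMl ?h ?inE ?eqxx // IH // => Y Yr.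
by apply: h; rewrite inE Yr orbT.
Qed.

Lemma quot_mem (gT : finGroupType) (N A X : {group gT}) a :
  A \subset 'N(N) -> A :&: N = 1 -> X \subset A -> a \in A ->
  (coset N a \in X / N) = (a \in X).
Proof.
move=> nNA tiAN sXA Aa; apply/idP/idP; last exact: mem_quotient.
move=> Xa.
have : a \in coset N @*^-1 (X / N).
  by apply/morphpreP; split => //; apply: (subsetP nNA).
rewrite quotientK; last exact: subset_trans nNA.
move=> NXa.
have : a \in A :&: (N * X) by rewrite inE Aa.
by rewrite -group_modr // tiAN mul1g.
Qed.

Lemma nil_prod n : forall (gT : finGroupType) (Q A B : {group gT}) (s : seq {group gT}),
  (#|Q| <= n)%N -> nilpotent Q -> A \subset 'N(Q) -> coprime #|Q| #|A| ->
  B \subset A -> Q \subset 'C(B) ->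
  (forall X, X \in s -> (B \subset X) && (X \subset A)) ->
  (forall a, a \in A :\: B -> count (fun X : {group gT} => a \in X) s = 1%N) ->
  (0 < size s)%N -> coprime #|Q| ((size s).-1 * #|B|) ->
  Q \subset \prod_(X <- s) 'C_Q(X).
Proof.
elim: n => [|n IH] gT Q A B s leQ nilQ nQA coQA sBA cQB sXs cnt s0 co.
  by move: leQ; rewrite leqn0 (negbTE (lt0n_neq0 (cardG_gt0 Q))).
have [abQ | nabQ] := boolP (abelian Q).
  have := abel_prod abQ nQA sBA cQB sXs. move=> h. exact: h cnt s0 co.
set N := 'Z(Q).
have sNQ : N \subset Q := center_sub Q.
have nNQ : Q \subset 'N(N) := normal_norm (center_normal Q).
have cNQ : N \subset 'C(Q) by rewrite subIset // subxx orbT.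
have nNA : A \subset 'N(N) := char_norm_trans (center_char Q) nQA.
have ntN : N :!=: 1.
  rewrite (center_nil_eq1 nilQ); apply: contra nabQ => /eqP ->; exact: abelian1.
have tiAN : A :&: N = 1.
  by apply: coprime_TIg; rewrite coprime_sym (coprimeSg sNQ).
have abN : abelian N := center_abelian Q.
have HN : N \subset \prod_(X <- s) 'C_N(X).
  apply: (abel_prod abN nNA sBA) => //.
    exact: subset_trans sNQ cQB.
  exact: coprimeSg sNQ co.
pose sb := [seq (X / N)%G | X <- s].
have IHq : Q / N \subset \prod_(X <- sb) 'C_(Q / N)(X).
  apply: (IH _ _ (A / N)%G (B / N)%G).
  - by rewrite -ltnS (leq_trans (ltn_quotient ntN sNQ)).
  - exact: quotient_nil.
  - exact: quotient_norms.
  - exact: coprime_morph.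
  - exact: quotientS.
  - exact: quotient_cents.
  - move=> _ /mapP[X Xs ->] /=; have /andP[sBX sXA] := sXs X Xs.
    by rewrite !quotientS.
  - move=> _ /setDP[/morphimP[a Na Aa ->] nBa].
    rewrite count_map -(cnt a); last first.
      by rewrite inE Aa andbT; apply: contra nBa; apply: mem_quotient.
    apply: eq_in_count => X Xs /=.
    have /andP[_ sXA] := sXs X Xs.
    exact: (@quot_mem gT [group of N] A X a nNA tiAN sXA Aa).
  - by rewrite size_map.
  - rewrite size_map; apply: (coprime_dvdl (dvdn_quotient _ _)).
    apply: coprime_dvdr co; apply: dvdn_mul => //; exact: dvdn_quotient.
rewrite big_map in IHq.
have eqC : forall X, X \in s -> 'C_(Q / N)(X / N) = 'C_Q(X) / N.
  move=> X Xs; have /andP[_ sXA] := sXs X Xs.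
  symmetry; apply: coprime_norm_quotient_cent.
  - exact: subset_trans nQA.
  - exact: subset_trans nNA.
  - by apply: (coprimeSg sNQ); apply: (coprimegS sXA).
  - exact: abelian_sol.
rewrite (eq_big_seq _ eqC) /= quot_prod in IHq; last first.
  by move=> X _; apply: subset_trans nNQ; apply: subsetIl.
rewrite quotientSK // in IHq.
apply: subset_trans IHq _.
apply: subset_trans (absorb s sNQ cNQ).
exact: mulSg.
Qed.

End Nil.
End AbPart.
Import GroupScope.
Lemma count_sum (T : eqType) (P : pred T) (r : seq T) : count P r = (\sum_(x <- r) (P x : nat))%N.
Proof. elim: r => [|x r IH]; by rewrite ?big_nil ?big_cons //= IH. Qed.

Lemma size_s (gT : finGroupType) (q : nat) (A B : {group gT}) (s : seq {group gT}) :
  prime q -> #|A| = (q ^ 3)%N -> #|B| = q -> B \subset A ->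
  (forall X, X \in s -> (B \subset X) && (X \subset A) && (#|X| == q ^ 2)%N) ->
  (forall a, a \in A :\: B -> count (fun X : {group gT} => a \in X) s = 1%N) ->
  size s = q.+1.
Proof.
move=> pq oA oB sBA sXs cnt.
have q2 := prime_gt1 pq.
have e1 : (\sum_(a in A :\: B) count (fun X : {group gT} => a \in X) s)%N = (q ^ 3 - q)%N.
  rewrite (eq_bigr (fun _ => 1%N)) // sum1_card cardsD (setIidPr sBA) oA oB //.
have e2 : (\sum_(a in A :\: B) count (fun X : {group gT} => a \in X) s)%N = (size s * (q ^ 2 - q))%N.
  under eq_bigr => a _ do rewrite count_sum.
  rewrite exchange_big /= -[size s]count_predT count_sum big_distrl /=.
  apply: eq_big_seq => X Xs; rewrite mul1n.
  have /andP[/andP[sBX sXA] /eqP oX] := sXs X Xs.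
  rewrite -big_mkcondr /= sum1_card.
  have -> : (q ^ 2 - q = #|X :\: B|)%N by rewrite cardsD (setIidPr sBX) oX oB.
  apply: eq_card => a; rewrite !inE.
  rewrite unfold_in /= !inE; case: (a \in B) => //=; case: (boolP (a \in X)) => [Xa|]; rewrite ?(subsetP sXA a Xa) ?andbF //.
move: e2; rewrite e1 => e.
have h : (q ^ 3 - q = q.+1 * (q ^ 2 - q))%N.
  rewrite !expnS expn0 !muln1; nia.
apply/eqP; rewrite -(@eqn_pmul2r (q ^ 2 - q)); first by rewrite -e h.
nia.
Qed.

Lemma cnt_s (gT : finGroupType) (q : nat) (A B : {group gT}) (s : seq {group gT}) :
  prime q -> exponent A = q -> #|B| = q -> B \subset A -> A \subset 'N(B) -> uniq s ->
  (forall X : {group gT}, (X \in s) = [&& B \subset X, X \subset A & #|X| == (q ^ 2)%N]) ->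
  forall a, a \in A :\: B -> count (fun X : {group gT} => a \in X) s = 1%N.
Proof.
move=> pq expA oB sBA nBA us hs a /setDP[Aa nBa].
have ntA : a != 1 by apply: contra nBa => /eqP ->; apply: group1.
have oa : #[a] = q.
  have := dvdn_exponent Aa; rewrite expA; apply/(prime_nt_dvdP pq).
  by rewrite order_eq1.
have tiaB : <[a]> :&: B = 1.
  by apply: prime_TIg; [rewrite -orderE oa | rewrite cycle_subG].
pose Xa := (<[a]> <*> B)%G.
have oXa : #|Xa| = (q ^ 2)%N.
  have nBca : <[a]> \subset 'N(B) by rewrite cycle_subG (subsetP nBA).
  rewrite /= norm_joinEl //.
  by rewrite TI_cardMg // -orderE oa oB.
have sXaA : Xa \subset A by rewrite join_subG cycle_subG Aa.
have Xas : Xa \in s by rewrite hs joing_subr sXaA oXa eqxx.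
transitivity (count_mem Xa s); last by rewrite (count_uniq_mem Xa us) Xas.
apply: eq_in_count => X Xs /=; apply/idP/eqP => [aX | ->].
  have := hs X; rewrite Xs => /esym/and3P[sBX sXA /eqP oX].
  apply: val_inj => /=; apply/eqP; rewrite eq_sym eqEcard oX oXa leqnn andbT.
  by rewrite join_subG cycle_subG aX.
by rewrite /= mem_gen // inE cycle_id.
Qed.

Lemma part (gT : finGroupType) (q : nat) (A B K : {group gT}) (s : seq {group gT}) :
  prime q -> exponent A = q -> #|A| = (q ^ 3)%N -> #|B| = q -> B \subset A -> A \subset 'C(B) -> uniq s ->
  (forall X : {group gT}, (X \in s) = [&& B \subset X, X \subset A & #|X| == (q ^ 2)%N]) ->
  nilpotent K -> A \subset 'N(K) -> coprime #|K| q ->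
  'C_K(B) = \prod_(X <- s) 'C_K(X).
Proof.
move=> pq expA oA oB sBA cAB us hs nilK nKA coK.
have nBA : A \subset 'N(B) := cents_norm cAB.
have sXs : forall X, X \in s -> (B \subset X) && (X \subset A).
  by move=> X; rewrite hs => /and3P[-> -> _].
have cnt := cnt_s pq expA oB sBA nBA us hs.
have sz : size s = q.+1.
  by apply: (size_s pq oA oB sBA) => [X|]; [rewrite hs => /and3P[-> -> ->]|].
have eqC : forall X, X \in s -> 'C_('C_K(B))(X) = 'C_K(X).
  move=> X /sXs /andP[sBX _].
  by rewrite -setIA (setIidPr (centS sBX)).
apply/eqP; rewrite eqEsubset; apply/andP; split; last first.
  by apply: prod_sub => X /sXs /andP[sBX _]; apply: setIS; apply: centS.
rewrite -(eq_big_seq _ eqC).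
have coQ : coprime #|'C_K(B)| q by apply: coprimeSg coK; apply: subsetIl.
apply: (nil_prod (leqnn _) _ _ _ sBA) => //.
- exact: nilpotentS (subsetIl _ _) nilK.
- by rewrite normsI // norms_cent.
- by rewrite oA coprimeXr.
- exact: subsetIr.
- by rewrite sz.
- by rewrite sz /= oB coprimeMr coQ.
Qed.

Theorem lemma2p3 (gT : finGroupType) (q p : nat) (A B G P H : {group gT})
    (s : seq {group gT}) :
  prime q -> prime p ->
  exponent A = q -> #|A| = (q ^ 3)%N ->
  B \subset 'Z(A) -> #|B| = q ->
  A \subset 'N(G) -> coprime #|G| q ->
  P * H = G ->
  A \subset 'N(P) -> A \subset 'N(H) ->
  P <| G -> p.-group P ->
  nilpotent H -> p^'.-group H ->
  uniq s ->
  (forall X : {group gT}, (X \in s) = [&& B \subset X, X \subset A & #|X| == (q ^ 2)%N]) ->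
  'C_P(B) = \prod_(X <- s) 'C_P(X) /\ 'C_H(B) = \prod_(X <- s) 'C_H(X).
Proof.
move=> pq pp expA oA sBZ oB nGA coGq PHG nPA nHA nsPG pP nilH _ us hs.
have sBA : B \subset A := subset_trans sBZ (center_sub A).
have cAB : A \subset 'C(B).
  by rewrite centsC; apply: subset_trans sBZ _; apply: subsetIr.
have sPG : P \subset G := normal_sub nsPG.
have sHG : H \subset G by rewrite -PHG mulG_subr.
split; apply: (part pq expA oA oB sBA cAB us hs) => //.
- exact: pgroup_nil pP.
- exact: coprimeSg sPG coGq.
- exact: coprimeSg sHG coGq.
Qed.
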